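(* Let $\mathbb{K}$ be an algebraically closed field of characteristic $p$, with $p=0$ or $p>n$. Let $(\Lambda_1,\Lambda_2,\Lambda_3)$ be a regular dual $3$-net of order $n\ge4$ in $PG(2,\mathbb{K})$. Then the three lines containing the components are not concurrent, i.e. they are the sides of a triangle (the net is triangular).
   Context: A dual $3$-net of order $n$ in $PG(2,\mathbb{K})$ is a triple $(\Lambda_1,\Lambda_2,\Lambda_3)$ of pairwise disjoint point sets, each of size $n$, such that every line meeting two distinct components meets each component in exactly one point. It is regular if its three components are contained in three (distinct) lines, one component on each line; it is triangular if these three lines are the sides of a triangle. *)

(* Defs.v *)
(* PG(2,K): points and lines are nonzero row vectors of K^3,
   taken up to a nonzero scalar; incidence is the vanishing of the dot product. *)
From HB Require Import structures.
From mathcomp Require Import all_boot all_order all_algebra.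
Set Implicit Arguments. Unset Strict Implicit. Unset Printing Implicit Defensive.
Import GRing.Theory.
Local Open Scope ring_scope.

Section PG2.
Variable K : fieldType.

Definition incident (P l : 'rV[K]_3) : Prop := \sum_(i < 3) P 0 i * l 0 i = 0.

Definition proj_eq (P Q : 'rV[K]_3) : Prop := exists c : K, c != 0 /\ Q = c *: P.

Definition dual_3net (n : nat) (L : 'I_3 -> 'I_n -> 'rV[K]_3) : Prop :=
  [/\ (forall i a, L i a != 0),
      (forall i j a b, proj_eq (L i a) (L j b) -> i = j /\ a = b) &
      (forall l : 'rV[K]_3, l != 0 -> forall i j : 'I_3, i <> j ->
         (exists a, incident (L i a) l) -> (exists b, incident (L j b) l) ->
         forall k, exists! a, incident (L k a) l)].

Definition component_lines (n : nat) (L : 'I_3 -> 'I_n -> 'rV[K]_3)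
  (l : 'I_3 -> 'rV[K]_3) : Prop :=
  [/\ (forall i, l i != 0),
      (forall i j, i <> j -> ~ proj_eq (l i) (l j)) &
      (forall i a, incident (L i a) (l i))].

Definition concurrent (l : 'I_3 -> 'rV[K]_3) : Prop :=
  exists P : 'rV[K]_3, P != 0 /\ forall i, incident P (l i).

Definition regular_net (n : nat) (L : 'I_3 -> 'I_n -> 'rV[K]_3) : Prop :=
  exists l, component_lines L l.

Definition triangular_net (n : nat) (L : 'I_3 -> 'I_n -> 'rV[K]_3) : Prop :=
  exists l, component_lines L l /\ ~ concurrent l.

End PG2.

(* Main.v *)
Require Import Defs.
From mathcomp Require Import all_boot all_order all_algebra.
From mathcomp Require Import ring.
Set Implicit Arguments. Unset Strict Implicit. Unset Printing Implicit Defensive.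
Import GRing.Theory.
Local Open Scope ring_scope.

Section Aux.
Variable K : fieldType.
Implicit Types u v w x y z : 'rV[K]_3.

Definition i0 : 'I_3 := @Ordinal 3 0 isT.
Definition i1 : 'I_3 := @Ordinal 3 1 isT.
Definition i2 : 'I_3 := @Ordinal 3 2 isT.

Lemma ord3_cases (j : 'I_3) : j = i0 \/ j = i1 \/ j = i2.
Proof.
case: j => [[|[|[|j]]] Hj]; [left|right;left|right;right|by []]; exact: val_inj.
Qed.

Definition dot u v : K := \sum_(i < 3) u 0 i * v 0 i.

Definition cross u v : 'rV[K]_3 := \row_(j < 3)
  match nat_of_ord j with
  | 0 => u 0 i1 * v 0 i2 - u 0 i2 * v 0 i1
  | 1 => u 0 i2 * v 0 i0 - u 0 i0 * v 0 i2
  | _ => u 0 i0 * v 0 i1 - u 0 i1 * v 0 i0 end.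

Lemma dotE u v : dot u v = u 0 i0 * v 0 i0 + u 0 i1 * v 0 i1 + u 0 i2 * v 0 i2.
Proof.
rewrite /dot !big_ord_recr big_ord0 /= add0r.
by congr (_ * _ + _ * _ + _ * _); congr (_ _ _); apply: val_inj.
Qed.

Lemma rowE3 u v : u 0 i0 = v 0 i0 -> u 0 i1 = v 0 i1 -> u 0 i2 = v 0 i2 -> u = v.
Proof.
move=> h0 h1 h2; apply/rowP => j; rewrite ?mxE.
by case: (ord3_cases j) => [->|[->|->]].
Qed.

Lemma dotC u v : dot u v = dot v u.
Proof. rewrite !dotE; ring. Qed.

Lemma dotBl u v w : dot (u - v) w = dot u w - dot v w.
Proof. rewrite !dotE !mxE; ring. Qed.

Lemma dotZl (a : K) u w : dot (a *: u) w = a * dot u w.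
Proof. rewrite !dotE !mxE; ring. Qed.

Lemma dot_crossA u v : dot u (cross u v) = 0.
Proof. rewrite dotE !mxE /=; ring. Qed.

Lemma dot_crossB u v : dot v (cross u v) = 0.
Proof. rewrite dotE !mxE /=; ring. Qed.

Lemma dot_cross_swap b a c : dot b (cross a c) = - dot c (cross a b).
Proof. rewrite !dotE !mxE /=; ring. Qed.

Lemma crossC u v : cross v u = - cross u v.
Proof. apply: rowE3; rewrite !mxE /=; ring. Qed.

Lemma bac x y z : cross x (cross y z) = dot x z *: y - dot x y *: z.
Proof. apply: rowE3; rewrite !dotE !mxE /=; ring. Qed.

Lemma nz_coord v : v != 0 -> [\/ v 0 i0 != 0, v 0 i1 != 0 | v 0 i2 != 0].
Proof.
move=> hv; case: (eqVneq (v 0 i0) 0) => h0; last by constructor 1.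
case: (eqVneq (v 0 i1) 0) => h1; last by constructor 2.
case: (eqVneq (v 0 i2) 0) => h2; last by constructor 3.
by move/eqP: hv; case; apply: rowE3; rewrite mxE.
Qed.

Lemma eq0_sign (a b : K) : b = 0 -> (a = b \/ a = - b) -> a = 0.
Proof. by move=> -> [->|->]; rewrite ?oppr0. Qed.

Lemma cross0_prop u v : cross u v = 0 -> v != 0 -> exists s, u = s *: v.
Proof.
move=> hc hv.
have c0 : u 0 i1 * v 0 i2 - u 0 i2 * v 0 i1 = 0 by have := congr1 (fun w => w 0 i0) hc; rewrite !mxE.
have c1 : u 0 i2 * v 0 i0 - u 0 i0 * v 0 i2 = 0 by have := congr1 (fun w => w 0 i1) hc; rewrite !mxE.
have c2 : u 0 i0 * v 0 i1 - u 0 i1 * v 0 i0 = 0 by have := congr1 (fun w => w 0 i2) hc; rewrite !mxE.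
case: (nz_coord hv) => h.
- exists (u 0 i0 / v 0 i0); apply: rowE3; rewrite mxE.
  + by rewrite divfK.
  + apply: (mulIf h); rewrite mulrAC divfK //; apply: subr0_eq; apply: (eq0_sign c2); first [ left; ring | right; ring ].
  + apply: (mulIf h); rewrite mulrAC divfK //; apply: subr0_eq; apply: (eq0_sign c1); first [ left; ring | right; ring ].
- exists (u 0 i1 / v 0 i1); apply: rowE3; rewrite mxE.
  + apply: (mulIf h); rewrite mulrAC divfK //; apply: subr0_eq; apply: (eq0_sign c2); first [ left; ring | right; ring ].
  + by rewrite divfK.
  + apply: (mulIf h); rewrite mulrAC divfK //; apply: subr0_eq; apply: (eq0_sign c0); first [ left; ring | right; ring ].
- exists (u 0 i2 / v 0 i2); apply: rowE3; rewrite mxE.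
  + apply: (mulIf h); rewrite mulrAC divfK //; apply: subr0_eq; apply: (eq0_sign c1); first [ left; ring | right; ring ].
  + apply: (mulIf h); rewrite mulrAC divfK //; apply: subr0_eq; apply: (eq0_sign c0); first [ left; ring | right; ring ].
  + by rewrite divfK.
Qed.

Lemma kernel x y z : cross y z != 0 -> dot x y = 0 -> dot x z = 0 ->
  exists s, x = s *: cross y z.
Proof.
move=> hn h1 h2; apply: cross0_prop => //.
by rewrite bac h1 h2 !scale0r subr0.
Qed.

Lemma proj_of_cross0 u v : u != 0 -> v != 0 -> cross u v = 0 -> proj_eq u v.
Proof.
move=> hu hv hc.
have [s hs] : exists s, v = s *: u by apply: cross0_prop => //; rewrite crossC hc oppr0.
exists s; split => //; apply: contraNneq hv => s0; by rewrite hs s0 scale0r.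
Qed.

Lemma dot0l w : dot 0 w = 0.
Proof. rewrite dotE !mxE; ring. Qed.

End Aux.

Lemma main_contra (K : fieldType) n (L : 'I_3 -> 'I_n -> 'rV[K]_3)
  (l : 'I_3 -> 'rV[K]_3) (P : 'rV[K]_3) :
  (1 < n)%N -> n%:R != 0 :> K -> dual_3net L -> component_lines L l -> P != 0 ->
  (forall i, incident P (l i)) -> False.
Proof.
move=> n1 nR [Hnz Hdist Hnet] [Hl0 Hldist Hinc] HP0 HPl.
pose o0 : 'I_n := Ordinal (ltnW n1).
pose o1 : 'I_n := Ordinal n1.
have o01 : o0 != o1 by [].
have n01 : i0 <> i1 by move=> /(congr1 val).
have n02 : i0 <> i2 by move=> /(congr1 val).
have n12 : i1 <> i2 by move=> /(congr1 val).
have Hinc' : forall i a, dot (L i a) (l i) = 0 := Hinc.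
have Hno : forall i j a, i <> j -> dot (L i a) (l j) != 0.
  move=> i j a hij; apply/eqP => h.
  have [c [_ hu]] := Hnet (l j) (Hl0 j) i j hij (ex_intro _ a h) (ex_intro _ o0 (Hinc j o0)) j.
  have e0 := hu o0 (Hinc j o0); have e1 := hu o1 (Hinc j o1).
  by move: o01; rewrite -e0 -e1 eqxx.
have Hcr : forall i j a b, i <> j -> cross (L i a) (L j b) != 0.
  move=> i j a b hij; apply/eqP => h.
  by have [] := Hdist _ _ _ _ (proj_of_cross0 (Hnz i a) (Hnz j b) h).
pose cf a b := odflt o0 [pick c | dot (L i2 c) (cross (L i0 a) (L i1 b)) == 0].
have Hcf : forall a b, dot (L i2 (cf a b)) (cross (L i0 a) (L i1 b)) = 0.
  move=> a b; rewrite /cf; case: pickP => [c /eqP //|hnone].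
  have [c [hc _]] := Hnet _ (Hcr i0 i1 a b n01) i0 i1 n01
     (ex_intro _ a (dot_crossA _ _)) (ex_intro _ b (dot_crossB _ _)) i2.
  by move: (hnone c); rewrite (hc : dot _ _ = 0) eqxx.
have Hinj : forall a, injective (cf a).
  move=> a b b' e.
  have h1 := Hcf a b; have h2 := Hcf a b'; rewrite -e in h2.
  have [b0 [_ hu]] := Hnet _ (Hcr i0 i2 a (cf a b) n02) i0 i2 n02
     (ex_intro _ a (dot_crossA _ _)) (ex_intro _ (cf a b) (dot_crossB _ _)) i1.
  have g1 : dot (L i1 b) (cross (L i0 a) (L i2 (cf a b))) = 0
    by rewrite dot_cross_swap h1 oppr0.
  have g2 : dot (L i1 b') (cross (L i0 a) (L i2 (cf a b))) = 0
    by rewrite dot_cross_swap h2 oppr0.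
  by rewrite -(hu b g1) -(hu b' g2).
pose hA a := (dot (L i0 a) (l i2))^-1 *: L i0 a.
pose hB b := (dot (L i1 b) (l i2))^-1 *: L i1 b.
pose hC c := (dot (L i2 c) (l i0))^-1 *: L i2 c.
have Hk : forall b, dot (hB b) (l i0) = dot (hB o0) (l i0).
  move=> b.
  have W0 : cross (l i1) (l i2) != 0.
    apply/eqP => h; apply: (Hldist i1 i2 n12); exact: proj_of_cross0 (Hl0 _) (Hl0 _) h.
  have [t ht] := kernel W0 (HPl i1) (HPl i2).
  have Wl0 : dot (cross (l i1) (l i2)) (l i0) = 0.
    have hp0 : dot P (l i0) = 0 := HPl i0.
    rewrite ht dotZl in hp0.
    move/eqP: hp0; rewrite mulf_eq0 => /orP[/eqP t0|/eqP //].
    by move: HP0; rewrite ht t0 scale0r eqxx.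
  have d1 : dot (hB b - hB o0) (l i1) = 0 by rewrite dotBl !dotZl !Hinc' !mulr0 subrr.
  have d2 : dot (hB b - hB o0) (l i2) = 0 by rewrite dotBl !dotZl !mulVf ?subrr // Hno.
  have [s hs] := kernel W0 d1 d2.
  have := congr1 (fun x => dot x (l i0)) hs.
  by rewrite /= dotZl Wl0 mulr0 dotBl => /eqP; rewrite subr_eq0 => /eqP.
have Hkey : forall a b, dot (hB o0) (l i0) *: hC (cf a b) = hB b - hA a.
  move=> a b; rewrite -(Hk b).
  have hc2 : dot (L i2 (cf a b)) (l i2) = 0 := Hinc i2 (cf a b).
  have Z0 : cross (l i2) (cross (L i0 a) (L i1 b)) != 0.
    rewrite bac; apply/eqP => h.
    have := congr1 (fun x => dot x (l i0)) h.
    rewrite /= dot0l dotBl !dotZl Hinc' mulr0 sub0r => /eqP.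
    rewrite oppr_eq0 mulf_eq0 => /orP[] /eqP h'.
    - by move: (Hno i0 i2 a n02); rewrite dotC h' eqxx.
    - by move: (Hno i1 i0 b (nesym n01)); rewrite h' eqxx.
  have [s hs] := kernel Z0 hc2 (Hcf a b).
  rewrite bac in hs.
  have s0 : s != 0 by apply: contraNneq (Hnz i2 (cf a b)) => s0; rewrite hs s0 scale0r.
  have := Hno i0 i2 a n02; have := Hno i1 i2 b n12; have := Hno i1 i0 b (nesym n01).
  rewrite /hA /hB /hC hs !dotZl dotBl !dotZl Hinc' mulr0 sub0r.
  rewrite [dot (l i2) (L i1 b)]dotC [dot (l i2) (L i0 a)]dotC.
  move=> h1 h2 h3.
  apply/rowP => j; rewrite !mxE.
  field.
  by rewrite h3 h2 s0 oppr_eq0 mulf_eq0 (negbTE h3) (negbTE h1).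
have Hsum : forall a, dot (hB o0) (l i0) *: \sum_c hC c = \sum_b hB b - hA a *+ n.
  move=> a; rewrite (reindex_inj (Hinj a)) scaler_sumr.
  under eq_bigr => b _ do rewrite Hkey.
  by rewrite sumrB sumr_const card_ord.
have e : hA o0 = hA o1.
  have := Hsum o1; rewrite (Hsum o0) => /addrI /oppr_inj.
  by rewrite -!scaler_nat => /(scalerI nR).
have hpe : proj_eq (L i0 o0) (L i0 o1).
  have a0 := Hno i0 i2 o0 n02; have a1 := Hno i0 i2 o1 n02.
  exists (dot (L i0 o1) (l i2) / dot (L i0 o0) (l i2)); split.
    by rewrite mulf_neq0 ?invr_eq0.
  move: e; rewrite /hA => e.
  apply/rowP => j; have := congr1 (fun v : 'rV[K]_3 => v 0 j) e; rewrite !mxE => ej.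
  by rewrite -[L i0 o1 0 j](mulVKf a1) -ej; ring.
by have [_ /eqP] := Hdist _ _ _ _ hpe; rewrite (negbTE o01).
Qed.

Local Close Scope ring_scope.

Theorem lemma4p2 (K : closedFieldType) (n : nat) (L : 'I_3 -> 'I_n -> 'rV[K]_3) :
  4 <= n ->
  (forall p : nat, p \in [pchar K]%R -> n < p) ->
  dual_3net L -> regular_net L -> triangular_net L.
Proof.
move=> n4 hch Hnet [l Hl]; exists l; split => //; case=> P [HP0 HPl].
have n0 : 0 < n by apply: leq_trans n4.
apply: (main_contra (n:=n) _ _ Hnet Hl HP0 HPl); first by apply: leq_trans n4.
apply/negP => h; have [p hp] := natf0_pchar n0 h.
have := hch p hp; have := dvdn_pcharf hp n; rewrite h => /dvdn_leq => /(_ n0).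
by rewrite leqNgt => /negbTE ->.
Qed.
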